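(* Let $\Lambda$ be a left cancellative small category. Consider the conditions: (1) $\sim_1=\sim_2$ on $\mathcal Z*X$; (2) for every $v\in\Lambda^0$, every nonempty $E\in\mathcal A_v$, every $\alpha\in E$, and every invertible $\mu\in\Lambda$ with $r(\mu)=s(\mu)=s(\alpha)$ and $\mu\ne s(\alpha)$, there is $\beta\in s(\alpha)\Lambda$ such that $\alpha\beta\in E$ and either $\mu\beta\notin\beta\Lambda$ or $\mu^{-1}\beta\notin\beta\Lambda$. Then (2) implies (1). If moreover $\Lambda$ is right cancellative, then (1) implies (2).
   Context: A left cancellative small category (LCSC) is a small category $\Lambda$ such that $\alpha\beta=\alpha\gamma$ implies $\beta=\gamma$; right cancellative means $\beta\alpha=\gamma\alpha$ implies $\beta=\gamma$. Composition $\alpha\beta$ is defined when $s(\alpha)=r(\beta)$; $\Lambda^0$ is the set of objects (identity morphisms); $v\Lambda=\{\alpha:r(\alpha)=v\}$; $\alpha\Lambda=\{\alpha\beta:r(\beta)=s(\alpha)\}$. For $\alpha\in\Lambda$, $\tau^\alpha(\beta)=\alpha\beta$ on $s(\alpha)\Lambda$ and $\sigma^\alpha:\alpha\Lambda\to s(\alpha)\Lambda$ is its inverse. A zigzag is a tuple $\zeta=(\alpha_1,\beta_1,\dots,\alpha_n,\beta_n)$ with $r(\alpha_i)=r(\beta_i)$ and $s(\alpha_{i+1})=s(\beta_i)$; $\mathcal Z$ is the set of zigzags, $s(\zeta)=s(\beta_n)$, $r(\zeta)=s(\alpha_1)$, $\mathcal Zv=\{\zeta:s(\zeta)=v\}$,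 $\overline\zeta=(\beta_n,\alpha_n,\dots,\beta_1,\alpha_1)$. The zigzag map $\varphi_\zeta=\sigma^{\alpha_1}\circ\tau^{\beta_1}\circ\cdots\circ\sigma^{\alpha_n}\circ\tau^{\beta_n}$ (partial injective map) has domain $A(\zeta)\subseteq s(\zeta)\Lambda$ and range $A(\overline\zeta)$. $\mathcal D^{(0)}_v$ is the set of nonempty $A(\zeta)$, $\zeta\in\mathcal Zv$; $\mathcal A_v$ is the ring of subsets of $v\Lambda$ generated by $\mathcal D^{(0)}_v$. $X_v$ is the set of ultrafilters of $\mathcal A_v$ ($\mathcal U_x$ denoting the ultrafilter $x$), with compact open basic sets $\widehat E=\{x:E\in\mathcal U_x\}$; $X=\bigsqcup_vX_v$, $r(x)=v$ for $x\in X_v$. For $x\in\widehat{A(\zeta)}$, $\Phi_\zeta(x)$ is the ultrafilter of $\mathcal A_{r(\zeta)}$ generated by $\{\varphi_\zeta(E\cap A(\zeta)):E\in\mathcal U_x\}$; $\Phi_\zeta:\widehat{A(\zeta)}\to\widehat{A(\overline\zeta)}$ is a homeomorphism. On $\mathcal Z*X=\{(\zeta,x):s(\zeta)=r(x),\ x\in\widehat{A(\zeta)}\}$: $(\zeta,x)\sim_1(\zeta',x')$ iff $x=x'$ and $\Phi_\zeta|_{\widehat E}=\Phi_{\zeta'}|_{\widehat E}$ for some $E\in\mathcal U_x$; $(\zeta,x)\sim_2(\zeta',x')$ iff $x=x'$ and $\varphi_\zeta|_E=\varphi_{\zeta'}|_E$ for some $E\in\mathcal U_x$. *)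

(* Defs.v *)
From Stdlib Require Import List.
Import ListNotations.

(** A small category: objects, morphisms, range r, source s, identities,
    and a total composition function that is meaningful when s a = r b. *)
Record SmallCat := {
  Obj : Type;
  Mor : Type;
  rng : Mor -> Obj;
  src : Mor -> Obj;
  idm : Obj -> Mor;                 (* Lambda^0 as identity morphisms *)
  comp : Mor -> Mor -> Mor;         (* comp a b = a b, defined when src a = rng b *)
  rng_id : forall v, rng (idm v) = v;
  src_id : forall v, src (idm v) = v;
  rng_comp : forall a b, src a = rng b -> rng (comp a b) = rng a;
  src_comp : forall a b, src a = rng b -> src (comp a b) = src b;
  comp_id_l : forall a, comp (idm (rng a)) a = a;
  comp_id_r : forall a, comp a (idm (src a)) = a;
  comp_assoc : forall a b c, src a = rng b -> src b = rng c ->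
      comp a (comp b c) = comp (comp a b) c
}.

Arguments rng {_}. Arguments src {_}. Arguments idm {_}. Arguments comp {_}.

Section Defs.
Variable L : SmallCat.
Notation M := (Mor L).
Notation O := (Obj L).

Definition LeftCancellative : Prop :=
  forall a b c : M, src a = rng b -> src a = rng c -> comp a b = comp a c -> b = c.

Definition RightCancellative : Prop :=
  forall a b c : M, src b = rng a -> src c = rng a -> comp b a = comp c a -> b = c.

Definition IsInverse (mu nu : M) : Prop :=
  src mu = rng nu /\ src nu = rng mu /\
  comp mu nu = idm (rng mu) /\ comp nu mu = idm (src mu).

Definition Invertible (mu : M) : Prop := exists nu, IsInverse mu nu.

Definition InRightIdeal (b g : M) : Prop :=
  exists d, rng d = src b /\ g = comp b d.

(** A zigzag (a1,b1,...,an,bn), n >= 1, is represented as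
    (p, l) standing for the nonempty list p :: l of pairs (a_i, b_i). *)
Definition Zigzag : Type := ((M * M) * list (M * M))%type.

Definition zlist (z : Zigzag) : list (M * M) := fst z :: snd z.

Fixpoint zz_wf (l : list (M * M)) : Prop :=
  match l with
  | [] => True
  | [(a, b)] => rng a = rng b
  | (a, b) :: (((a', b') :: _) as t) => rng a = rng b /\ src a' = src b /\ zz_wf t
  end.

Definition IsZigzag (z : Zigzag) : Prop := zz_wf (zlist z).

(** s(zeta) = s(b_n), r(zeta) = s(a_1) *)
Definition zsrc (z : Zigzag) : O := src (snd (last (snd z) (fst z))).
Definition zrng (z : Zigzag) : O := src (fst (fst z)).

Definition zbar (z : Zigzag) : Zigzag :=
  match rev (map (fun p => (snd p, fst p)) (zlist z)) with
  | [] => z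
  | p :: l => (p, l)
  end.

(** one step sigma^a o tau^b as a partial map (graph): y |-> z with a z = b y *)
Definition zstep (a b y z : M) : Prop :=
  rng y = src b /\ rng z = src a /\ comp a z = comp b y.

(** graph of sigma^{a1} o tau^{b1} o ... o sigma^{an} o tau^{bn}:
    the rightmost step (a_n, b_n) is applied first *)
Fixpoint zmap (l : list (M * M)) (x w : M) : Prop :=
  match l with
  | [] => x = w
  | (a, b) :: t => exists y, zmap t x y /\ zstep a b y w
  end.

Definition phi (z : Zigzag) : M -> M -> Prop := zmap (zlist z).

Definition Adom (z : Zigzag) (x : M) : Prop := exists w, phi z x w.

Definition Sub (E F : M -> Prop) : Prop := forall a, E a -> F a.
Definition SetEq (E F : M -> Prop) : Prop := forall a, E a <-> F a.
Definition NonEmpty (E : M -> Prop) : Prop := exists a, E a.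

Definition D0 (v : O) (E : M -> Prop) : Prop :=
  exists z, IsZigzag z /\ zsrc z = v /\ NonEmpty (Adom z) /\ SetEq E (Adom z).

Inductive RingGen (v : O) : (M -> Prop) -> Prop :=
| rg_gen : forall E, D0 v E -> RingGen v E
| rg_empty : RingGen v (fun _ => False)
| rg_union : forall E F, RingGen v E -> RingGen v F ->
    RingGen v (fun a => E a \/ F a)
| rg_diff : forall E F, RingGen v E -> RingGen v F ->
    RingGen v (fun a => E a /\ ~ F a).

(** A_v (closed under extensional equality of subsets) *)
Definition Av (v : O) (E : M -> Prop) : Prop :=
  exists E', RingGen v E' /\ SetEq E E'.

Definition IsFilter (v : O) (U : (M -> Prop) -> Prop) : Prop :=
  (exists E, U E) /\
  (forall E, U E -> Av v E /\ NonEmpty E) /\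
  (forall E F, U E -> U F -> U (fun a => E a /\ F a)) /\
  (forall E F, U E -> Av v F -> Sub E F -> U F).

Definition IsUltrafilter (v : O) (U : (M -> Prop) -> Prop) : Prop :=
  IsFilter v U /\
  (forall U', IsFilter v U' -> (forall E, U E -> U' E) -> forall E, U' E -> U E).

(** X = disjoint union of the X_v; a point is a pair (v, U) with U an
    ultrafilter of A_v, r(x) = v.  x \in E-hat iff U E. *)

(** Phi_zeta(x): the ultrafilter of A_{r(zeta)} generated by
    { phi_zeta(E \cap A(zeta)) : E \in U_x } *)
Definition PhiFam (z : Zigzag) (U : (M -> Prop) -> Prop) (F : M -> Prop) : Prop :=
  Av (zrng z) F /\
  exists E, U E /\ Sub (fun b => exists a, E a /\ Adom z a /\ phi z a b) F.

(** (zeta, x) \in Z * X, x = (v, U) *)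
Definition InZX (z : Zigzag) (v : O) (U : (M -> Prop) -> Prop) : Prop :=
  IsZigzag z /\ zsrc z = v /\ IsUltrafilter v U /\ U (Adom z).

Definition Sim1 (z z' : Zigzag) (v : O) (U : (M -> Prop) -> Prop) : Prop :=
  exists E, U E /\ Sub E (Adom z) /\ Sub E (Adom z') /\
    forall w V, IsUltrafilter w V -> V E ->
      zrng z = zrng z' /\ forall F, PhiFam z V F <-> PhiFam z' V F.

Definition Sim2 (z z' : Zigzag) (v : O) (U : (M -> Prop) -> Prop) : Prop :=
  exists E, U E /\ Sub E (Adom z) /\ Sub E (Adom z') /\
    forall a b : M, E a -> (phi z a b <-> phi z' a b).

Definition Cond1 : Prop :=
  forall z z' v U, InZX z v U -> InZX z' v U -> (Sim1 z z' v U <-> Sim2 z z' v U).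

Definition Cond2 : Prop :=
  forall (v : O) (E : M -> Prop), Av v E -> NonEmpty E ->
  forall a : M, E a ->
  forall mu nu : M, IsInverse mu nu -> rng mu = src a -> src mu = src a ->
    mu <> idm (src a) ->
    exists b : M, rng b = src a /\ E (comp a b) /\
      (~ InRightIdeal b (comp mu b) \/ ~ InRightIdeal b (comp nu b)).

End Defs.

(* Main.v *)
Require Import Defs.
From Stdlib Require Import List Classical.
Import ListNotations.
From mathcomp Require classical_sets.
Set Bullet Behavior "Strict Subproofs".

Lemma last_cons {A} (a : A) l d : last (a :: l) d = last l a.
Proof.
  revert a d. induction l as [|b l IH]; intros a d. reflexivity.
  change (last (b :: l) d = last (b :: l) a). rewrite !IH. reflexivity.
Qed.

Lemma zmap_src (L : SmallCat) l (x w : Mor L) : zmap L l x w -> src w = src x.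
Proof.
  revert w. induction l as [|[a b] t IH]; intros w H; simpl in H.
  - subst; reflexivity.
  - destruct H as [y [Hy [H1 [H2 H3]]]].
    rewrite <- (IH y Hy).
    rewrite <- (src_comp L a w) by (symmetry; exact H2).
    rewrite H3. apply src_comp. symmetry; exact H1.
Qed.

Lemma zmap_ext (L : SmallCat) l (x w c : Mor L) :
  zmap L l x w -> rng c = src x -> zmap L l (comp x c) (comp w c).
Proof.
  revert w. induction l as [|[a b] t IH]; intros w H Hc; simpl in H |- *.
  - subst; reflexivity.
  - destruct H as [y [Hy [H1 [H2 H3]]]].
    pose proof (zmap_src L t x y Hy) as Sy.
    assert (Sw : src w = src y).
    { rewrite <- (src_comp L a w) by (symmetry; exact H2).
      rewrite H3. apply src_comp. symmetry; exact H1. }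
    exists (comp y c). split. apply IH; assumption.
    split; [|split].
    + rewrite rng_comp by congruence. exact H1.
    + rewrite rng_comp by congruence. exact H2.
    + rewrite (comp_assoc L a w c) by congruence.
      rewrite (comp_assoc L b y c) by congruence. rewrite H3. reflexivity.
Qed.

Lemma zmap_fun (L : SmallCat) (hL : LeftCancellative L) l (x w w' : Mor L) :
  zmap L l x w -> zmap L l x w' -> w = w'.
Proof.
  revert w w'. induction l as [|[a b] t IH]; intros w w' H H'; simpl in H, H'.
  - congruence.
  - destruct H as [y [Hy [H1 [H2 H3]]]]. destruct H' as [y' [Hy' [H1' [H2' H3']]]].
    assert (y = y') by (apply (IH y y' Hy Hy')). subst y'.
    apply (hL a); try congruence.
Qed.

Lemma zmap_inj (L : SmallCat) (hL : LeftCancellative L) l (x x' w : Mor L) :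
  zmap L l x w -> zmap L l x' w -> x = x'.
Proof.
  revert w. induction l as [|[a b] t IH]; intros w H H'; simpl in H, H'.
  - congruence.
  - destruct H as [y [Hy [H1 [H2 H3]]]]. destruct H' as [y' [Hy' [H1' [H2' H3']]]].
    assert (y = y') by (apply (hL b); congruence). subst y'.
    apply (IH y Hy Hy').
Qed.

Lemma zmap_rng_dom (L : SmallCat) p t (x w : Mor L) :
  zmap L (p :: t) x w -> rng x = src (snd (last t p)).
Proof.
  revert p w. induction t as [|q t IH]; intros [a b] w H; simpl in H.
  - destruct H as [y [Hy [H1 _]]]. subst. exact H1.
  - destruct H as [y [Hy _]]. rewrite last_cons. apply (IH q y Hy).
Qed.

Lemma Adom_rng (L : SmallCat) z (x : Mor L) : Adom L z x -> rng x = zsrc L z.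
Proof.
  intros [w H]. unfold phi, zlist in H. apply zmap_rng_dom in H. exact H.
Qed.

Lemma phi_rng (L : SmallCat) z (x w : Mor L) : phi L z x w -> rng w = zrng L z.
Proof.
  unfold phi, zlist, zrng. destruct z as [[a b] t]. simpl.
  intros [y [_ [_ [H _]]]]. exact H.
Qed.

Lemma Adom_ext (L : SmallCat) z (x c : Mor L) :
  Adom L z x -> rng c = src x -> Adom L z (comp x c).
Proof. intros [w H] Hc. exists (comp w c). apply zmap_ext; assumption. Qed.

Lemma Av_ext (L : SmallCat) v (E F : Mor L -> Prop) : Av L v E -> SetEq L E F -> Av L v F.
Proof. intros [E' [H1 H2]] H. exists E'. split; auto. intro a. specialize (H a). specialize (H2 a). tauto. Qed.

Lemma Av_Adom (L : SmallCat) z : IsZigzag L z -> Av L (zsrc L z) (Adom L z).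
Proof.
  intros Hz. destruct (classic (NonEmpty L (Adom L z))) as [Hn|Hn].
  - exists (Adom L z). split. apply rg_gen. exists z. repeat split; auto. intro; tauto.
  - exists (fun _ => False). split. apply rg_empty. intro a. split; [|tauto].
    intro Ha. apply Hn. exists a. exact Ha.
Qed.

Lemma Av_inter (L : SmallCat) v (E F : Mor L -> Prop) :
  Av L v E -> Av L v F -> Av L v (fun a => E a /\ F a).
Proof.
  intros [E' [HE HE']] [F' [HF HF']].
  exists (fun a => E' a /\ ~ (E' a /\ ~ F' a)). split.
  - apply rg_diff. exact HE. apply rg_diff; assumption.
  - intro a. specialize (HE' a). specialize (HF' a). destruct (classic (F' a)); tauto.
Qed.

Lemma Av_diff (L : SmallCat) v (E F : Mor L -> Prop) :
  Av L v E -> Av L v F -> Av L v (fun a => E a /\ ~ F a).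
Proof.
  intros [E' [HE HE']] [F' [HF HF']].
  exists (fun a => E' a /\ ~ F' a). split.
  - apply rg_diff; assumption.
  - intro a. specialize (HE' a). specialize (HF' a). tauto.
Qed.

Lemma RG_elt (L : SmallCat) v (E : Mor L -> Prop) : RingGen L v E -> forall a, E a -> rng a = v.
Proof.
  induction 1; intros a Ha.
  - destruct H as [z [_ [Hs [_ Heq]]]]. rewrite <- Hs. apply Adom_rng. apply Heq; exact Ha.
  - contradiction.
  - destruct Ha; auto.
  - destruct Ha; auto.
Qed.

Lemma Av_elt (L : SmallCat) v (E : Mor L -> Prop) a : Av L v E -> E a -> rng a = v.
Proof. intros [E' [H1 H2]] Ha. apply (RG_elt L v E' H1). apply H2; exact Ha. Qed.

Definition zp (L : SmallCat) (a : Mor L) : Zigzag L := ((a, idm (rng a)), []).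

Lemma zp_wf (L : SmallCat) (a : Mor L) : IsZigzag L (zp L a).
Proof. unfold IsZigzag, zp, zlist. simpl. rewrite rng_id. reflexivity. Qed.

Lemma zp_src (L : SmallCat) (a : Mor L) : zsrc L (zp L a) = rng a.
Proof. unfold zsrc, zp. simpl. apply src_id. Qed.

Lemma zp_dom (L : SmallCat) (a x : Mor L) : Adom L (zp L a) x <-> InRightIdeal L a x.
Proof.
  unfold Adom, phi, zp, zlist, InRightIdeal. simpl. split.
  - intros [w [y [Hy [H1 [H2 H3]]]]]. subst y. exists w. split. exact H2.
    rewrite H3. rewrite src_id in H1. rewrite <- H1. symmetry. apply comp_id_l.
  - intros [d [Hd Hx]]. exists d. exists x. split. reflexivity.
    assert (Hr : rng x = rng a) by (subst; apply rng_comp; congruence).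
    split. rewrite src_id. exact Hr. split. exact Hd.
    rewrite <- Hr, comp_id_l. symmetry; exact Hx.
Qed.

Lemma Av_ideal (L : SmallCat) (a : Mor L) : Av L (rng a) (InRightIdeal L a).
Proof.
  apply (Av_ext L _ (Adom L (zp L a))). rewrite <- (zp_src L a) at 1. apply Av_Adom, zp_wf.
  intro x. apply zp_dom.
Qed.

Lemma IRI_refl (L : SmallCat) (a : Mor L) : InRightIdeal L a a.
Proof. exists (idm (src a)). split. apply rng_id. symmetry. apply comp_id_r. Qed.

Lemma filt_up (L : SmallCat) v U (E F : Mor L -> Prop) :
  IsFilter L v U -> U E -> Av L v F -> Sub L E F -> U F.
Proof. intros [_ [_ [_ H]]]. apply H. Qed.

Lemma filt_inter (L : SmallCat) v U (E F : Mor L -> Prop) :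
  IsFilter L v U -> U E -> U F -> U (fun a => E a /\ F a).
Proof. intros [_ [_ [H _]]]. apply H. Qed.

Lemma filt_ne (L : SmallCat) v U (E : Mor L -> Prop) :
  IsFilter L v U -> U E -> NonEmpty L E.
Proof. intros [_ [H _]] HE. apply H; exact HE. Qed.

Lemma filt_Av (L : SmallCat) v U (E : Mor L -> Prop) :
  IsFilter L v U -> U E -> Av L v E.
Proof. intros [_ [H _]] HE. apply H; exact HE. Qed.

Lemma ultra_exists (L : SmallCat) v (S : Mor L -> Prop) :
  Av L v S -> NonEmpty L S -> exists V, IsUltrafilter L v V /\ V S.
Proof.
  intros HS HSn.
  set (P := fun (A : (Mor L -> Prop) -> Prop) =>
              (forall E, ~ A E) \/ (IsFilter L v A /\ A S)).
  assert (HZ : forall F : (((Mor L -> Prop) -> Prop) -> Prop),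
    classical_sets.subset F P -> classical_sets.total_on F (@classical_sets.subset _) ->
    P (classical_sets.bigcup F (fun X => X))).
  { intros F HFP Htot.
    destruct (classic (exists A E, F A /\ A E)) as [[A0 [E0 [HA0 HE0]]]|Hno].
    - assert (HA0f : IsFilter L v A0 /\ A0 S).
      { destruct (HFP A0 HA0) as [h|h]. exfalso; exact (h E0 HE0). exact h. }
      assert (Hmem : forall X E, F X -> X E -> IsFilter L v X).
      { intros X E HX HXE. destruct (HFP X HX) as [h|h]. exfalso; exact (h E HXE). apply h. }
      right. split; [split; [|split; [|split]]|].
      + exists E0. exists A0; assumption.
      + intros E [X HX HXE]. split. apply (filt_Av L v X); auto. apply (Hmem X E HX HXE).
        apply (filt_ne L v X); auto. apply (Hmem X E HX HXE).
      + intros E E' [X HX HXE] [X' HX' HXE'].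
        destruct (Htot X X' HX HX') as [h|h].
        * exists X'. exact HX'. apply (filt_inter L v X'); auto. apply (Hmem X' E' HX' HXE').
        * exists X. exact HX. apply (filt_inter L v X); auto. apply (Hmem X E HX HXE).
      + intros E E' [X HX HXE] HAv Hsub. exists X. exact HX.
        apply (filt_up L v X E); auto. apply (Hmem X E HX HXE).
      + exists A0. exact HA0. apply HA0f.
    - left. intros E [X HX HXE]. apply Hno. exists X, E. split; assumption. }
  destruct (@classical_sets.Zorn_bigcup _ P HZ) as [A [HPA Hmax]].
  set (PF := fun E => Av L v E /\ Sub L S E).
  assert (HPF : IsFilter L v PF /\ PF S).
  { split; [split; [|split; [|split]]|].
    - exists S. split. exact HS. intros a h; exact h.
    - intros E [h1 h2]. split. exact h1. destruct HSn as [a ha]. exists a. apply h2, ha.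
    - intros E F [h1 h2] [h3 h4]. split. apply Av_inter; auto. intros a ha. split; auto.
    - intros E F [h1 h2] h3 h4. split. exact h3. intros a ha. apply h4, h2, ha.
    - split. exact HS. intros a h; exact h. }
  destruct HPA as [Hempty|[HAf HAS]].
  - exfalso. apply (Hmax PF). split.
    + intros E h. exfalso. exact (Hempty E h).
    + intro h. apply (Hempty S). apply h. apply HPF.
    + right. exact HPF.
  - exists A. split; [split|]; auto.
    intros U' HU' Hsub E HE. apply NNPP. intro hn. apply (Hmax U').
    + split. intros E' h. apply Hsub, h. intro h. apply hn, h, HE.
    + right. split. exact HU'. apply Hsub, HAS.
Qed.

Lemma sim2_sim1 (L : SmallCat) z z' v U :
  IsUltrafilter L v U -> Sim2 L z z' v U -> Sim1 L z z' v U.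
Proof.
  intros [HU _] [E [HE [H1 [H2 H3]]]].
  exists E. split; [exact HE|split; [exact H1|split; [exact H2|]]].
  intros w V [HV _] HVE.
  destruct (filt_ne L v U E HU HE) as [a Ha].
  destruct (H1 a Ha) as [b Hb].
  assert (Hr : zrng L z = zrng L z').
  { rewrite <- (phi_rng L z a b Hb). apply (phi_rng L z' a b). apply H3; auto. }
  split. exact Hr.
  intro F. split.
  - intros [HF [E1 [HE1 Hs]]]. split. rewrite <- Hr; exact HF.
    exists (fun x => E1 x /\ E x). split. apply (filt_inter L w V); auto.
    intros c [x [[Hx1 Hx2] [Hx3 Hx4]]]. apply Hs. exists x. split; auto. split. apply H1; auto.
    apply H3; auto.
  - intros [HF [E1 [HE1 Hs]]]. split. rewrite Hr; exact HF.
    exists (fun x => E1 x /\ E x). split. apply (filt_inter L w V); auto.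
    intros c [x [[Hx1 Hx2] [Hx3 Hx4]]]. apply Hs. exists x. split; auto. split. apply H2; auto.
    apply H3; auto.
Qed.

Lemma KL (L : SmallCat) (hL : LeftCancellative L) z z' v (E0 : Mor L -> Prop) :
  IsZigzag L z' -> zsrc L z = v -> zsrc L z' = v -> Av L v E0 ->
  Sub L E0 (Adom L z) -> Sub L E0 (Adom L z') -> zrng L z = zrng L z' ->
  (forall V, IsUltrafilter L v V -> V E0 -> forall F, PhiFam L z V F -> PhiFam L z' V F) ->
  forall a g g', E0 a -> phi L z a g -> phi L z' a g' -> InRightIdeal L g g'.
Proof.
  intros Hz' Hs Hs' HE0 Hd Hd' Hr HPF a g g' Ha Hg Hg'.
  apply NNPP; intro Hn.
  set (zT := ((g, idm (zrng L z')), zlist L z') : Zigzag L).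
  assert (HzT : IsZigzag L zT).
  { unfold zT, IsZigzag, zlist, zrng in *. destruct z' as [[a1 b1] t1]. simpl in *.
    rewrite !src_id, rng_id. split; [|split; auto].
    rewrite (phi_rng L z a g Hg). exact Hr. }
  assert (HsT : zsrc L zT = v).
  { rewrite <- Hs'. unfold zsrc, zT, zlist. cbn [fst snd]. rewrite last_cons. reflexivity. }
  assert (T1 : forall x b', Adom L zT x -> phi L z' x b' -> InRightIdeal L g b').
  { intros x b' [w Hw] Hb'. change (exists y, zmap L (zlist L z') x y /\ zstep L g (idm (zrng L z')) y w) in Hw.
    destruct Hw as [y [Hy [H1 [H2 H3]]]].
    assert (y = b') by (apply (zmap_fun L hL (zlist L z') x); assumption). subst y.
    exists w. split. exact H2. rewrite H3. rewrite src_id in H1. rewrite <- H1.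
    symmetry. apply comp_id_l. }
  assert (T2 : forall x b', phi L z' x b' -> InRightIdeal L g b' -> Adom L zT x).
  { intros x b' Hb' [d [Hd1 Hd2]]. exists d. change (exists y, zmap L (zlist L z') x y /\ zstep L g (idm (zrng L z')) y d).
    exists b'. split. exact Hb'. split; [|split].
    - rewrite src_id. apply (phi_rng L z' x b' Hb').
    - exact Hd1.
    - rewrite <- Hd2. rewrite <- (phi_rng L z' x b' Hb'). symmetry. apply comp_id_l. }
  assert (Hra : rng a = v) by (rewrite <- Hs; apply Adom_rng; apply Hd; exact Ha).
  set (S := fun x => (InRightIdeal L a x /\ E0 x) /\ ~ Adom L zT x).
  assert (HSa : Av L v S).
  { apply Av_diff. apply Av_inter; auto. rewrite <- Hra. apply Av_ideal.
    rewrite <- HsT. apply Av_Adom, HzT. }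
  assert (HSn : NonEmpty L S).
  { exists a. split. split. apply IRI_refl. exact Ha. intro h. apply Hn. apply (T1 a g' h Hg'). }
  destruct (ultra_exists L v S HSa HSn) as [V [[HV HVmax] HVS]].
  assert (HVE0 : V E0) by (apply (filt_up L v V S); auto; intros x hx; apply hx).
  assert (HVI : V (fun x => InRightIdeal L a x /\ E0 x)).
  { apply (filt_up L v V S); auto. apply Av_inter; auto. rewrite <- Hra. apply Av_ideal.
    intros x hx; apply hx. }
  assert (HPz : PhiFam L z V (InRightIdeal L g)).
  { split. rewrite <- (phi_rng L z a g Hg). apply Av_ideal.
    exists (fun x => InRightIdeal L a x /\ E0 x). split. exact HVI.
    intros b [x [[[d [Hd1 Hd2]] _] [_ Hph]]]. subst x.
    pose proof (zmap_ext L (zlist L z) a g d Hg Hd1) as Hgd.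
    assert (b = comp g d) by (apply (zmap_fun L hL (zlist L z) (comp a d)); assumption). subst b.
    exists d. split. rewrite (zmap_src L (zlist L z) a g Hg). exact Hd1. reflexivity. }
  destruct (HPF V (conj HV HVmax) HVE0 _ HPz) as [_ [E1 [HE1 Hsub]]].
  destruct (filt_ne L v V _ HV (filt_inter L v V E1 S HV HE1 HVS)) as [x [Hx1 [[Hx2 Hx3] Hx4]]].
  destruct (Hd' x Hx3) as [b' Hb'].
  apply Hx4. apply (T2 x b' Hb'). apply Hsub. exists x. split; [exact Hx1|split; [exists b'; exact Hb'|exact Hb']].
Qed.

Lemma mutual_ideal (L : SmallCat) (hL : LeftCancellative L) (g g' : Mor L) :
  InRightIdeal L g g' -> InRightIdeal L g' g ->
  exists d c, rng d = src g /\ g' = comp g d /\ IsInverse L d c /\ src d = src g'.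
Proof.
  intros [d [Hd Hg']] [c [Hc Hg]].
  assert (Hsd : src d = src g') by (rewrite Hg'; symmetry; apply src_comp; congruence).
  assert (Hsc : src c = src g) by (rewrite Hg; symmetry; apply src_comp; congruence).
  exists d, c. split; [exact Hd|split; [exact Hg'|split; [|exact Hsd]]].
  assert (Hdc : comp d c = idm (src g)).
  { apply (hL g).
    - rewrite rng_comp by congruence. congruence.
    - rewrite rng_id. reflexivity.
    - rewrite comp_assoc by congruence. rewrite <- Hg'. rewrite <- Hg. symmetry. apply comp_id_r. }
  assert (Hcd : comp c d = idm (src g')).
  { apply (hL g').
    - rewrite rng_comp by congruence. congruence.
    - rewrite rng_id. reflexivity.
    - rewrite comp_assoc by congruence. rewrite <- Hg. rewrite <- Hg'. symmetry. apply comp_id_r. }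
  unfold IsInverse. split; [congruence|split; [congruence|split]].
  - rewrite Hd. exact Hdc.
  - rewrite Hsd. exact Hcd.
Qed.

Lemma dirA (L : SmallCat) (hL : LeftCancellative L) : Cond2 L -> Cond1 L.
Proof.
  intros HC z z' v U HZ HZ'. split; [|apply sim2_sim1; apply HZ].
  intros [E0 [HU [Hd [Hd' HH]]]].
  destruct HZ as [Hz [Hs [HUu HUd]]]. destruct HZ' as [Hz' [Hs' _]].
  assert (Hr : zrng L z = zrng L z') by (apply (HH v U HUu HU)).
  assert (HE0 : Av L v E0) by (apply (filt_Av L v U); [apply HUu|exact HU]).
  assert (KL1 : forall a g g', E0 a -> phi L z a g -> phi L z' a g' -> InRightIdeal L g g').
  { apply (KL L hL z z' v E0); auto. intros V HV HVE F. apply (HH v V HV HVE). }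
  assert (KL2 : forall a g' g, E0 a -> phi L z' a g' -> phi L z a g -> InRightIdeal L g' g).
  { apply (KL L hL z' z v E0); auto. intros V HV HVE F. apply (HH v V HV HVE). }
  assert (MI : forall a g g', E0 a -> phi L z a g -> phi L z' a g' ->
     exists d c, rng d = src g /\ g' = comp g d /\ IsInverse L d c /\ src d = src g').
  { intros a g g' Ha Hg Hg'. apply mutual_ideal; auto. apply (KL1 a); auto. apply (KL2 a); auto. }
  assert (Key : forall a, E0 a -> exists g, phi L z a g /\ phi L z' a g).
  { intros a Ha. destruct (Hd a Ha) as [g Hg]. destruct (Hd' a Ha) as [g' Hg'].
    assert (Hsg : src g = src a) by (apply (zmap_src L (zlist L z)); exact Hg).
    assert (Hsg' : src g' = src a) by (apply (zmap_src L (zlist L z')); exact Hg').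
    destruct (MI a g g' Ha Hg Hg') as [d [c [Hrd [Hgd [Hinv Hsd]]]]].
    destruct (classic (d = idm (src a))) as [Heq|Hneq].
    - exists g. split. exact Hg. rewrite Hgd, Heq, <- Hsg, comp_id_r in Hg'. exact Hg'.
    - exfalso.
      destruct (HC v E0 HE0 (ex_intro _ a Ha) a Ha d c Hinv ltac:(congruence) ltac:(congruence) Hneq)
        as [b [Hb [HEab Hor]]].
      pose proof (zmap_ext L (zlist L z) a g b Hg Hb) as Hgb.
      pose proof (zmap_ext L (zlist L z') a g' b Hg' Hb) as Hg'b.
      destruct (MI (comp a b) _ _ HEab Hgb Hg'b) as [d' [c' [Hrd' [Hgd' [Hinv' Hsd']]]]].
      destruct Hinv as [I1 [I2 [I3 I4]]]. destruct Hinv' as [J1 [J2 [J3 J4]]].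
      assert (Hsgb : src (comp g b) = src b) by (apply src_comp; congruence).
      assert (Hsg'b : src (comp g' b) = src b) by (apply src_comp; congruence).
      assert (Hdb : comp d b = comp b d').
      { apply (hL g).
        - rewrite rng_comp by congruence. congruence.
        - rewrite rng_comp by congruence. congruence.
        - rewrite comp_assoc by congruence. rewrite <- Hgd.
          rewrite comp_assoc by congruence. exact Hgd'. }
      assert (Hcb : comp c b = comp b c').
      { assert (E1 : b = comp (comp c b) d').
        { rewrite <- comp_assoc by (try rewrite src_comp; congruence).
          rewrite <- Hdb. rewrite comp_assoc by congruence. rewrite I4.
          replace (src d) with (rng b) by congruence. symmetry. apply comp_id_l. }
        assert (Hscb : src (comp c b) = src b) by (apply src_comp; congruence).
        rewrite E1 at 2. rewrite <- comp_assoc by (try rewrite src_comp; congruence).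
        rewrite J3. replace (rng d') with (src (comp c b)) by congruence.
        symmetry. apply comp_id_r. }
      destruct Hor as [Hn|Hn]; apply Hn.
      + exists d'. split. congruence. exact Hdb.
      + exists c'. split. congruence. exact Hcb. }
  exists E0. split; [exact HU|split; [exact Hd|split; [exact Hd'|]]].
  intros a b Ha. destruct (Key a Ha) as [g [Hg Hg']]. split; intro Hb.
  - rewrite <- (zmap_fun L hL (zlist L z) a g b Hg Hb). exact Hg'.
  - rewrite <- (zmap_fun L hL (zlist L z') a g b Hg' Hb). exact Hg.
Qed.

Definition zm (L : SmallCat) (a m : Mor L) : Zigzag L :=
  ((idm (rng a), comp a m), [(a, idm (rng a))]).

Lemma zm_wf (L : SmallCat) (a m : Mor L) : rng m = src a -> src m = src a -> IsZigzag L (zm L a m).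
Proof.
  intros Hr Hs. unfold IsZigzag, zm, zlist. simpl. rewrite !rng_id.
  split. rewrite rng_comp by congruence. reflexivity.
  split. rewrite src_comp by congruence. congruence. reflexivity.
Qed.

Lemma zm_src (L : SmallCat) (a m : Mor L) : zsrc L (zm L a m) = rng a.
Proof. unfold zsrc, zm. simpl. apply src_id. Qed.

Lemma zm_phi (L : SmallCat) (a m x w : Mor L) : rng m = src a -> src m = src a ->
  (phi L (zm L a m) x w <-> exists d, rng d = src a /\ x = comp a d /\ w = comp a (comp m d)).
Proof.
  intros Hr Hs. unfold phi, zm, zlist. simpl. split.
  - intros [y [[y0 [Hy0 [H1 [H2 H3]]]] [K1 [K2 K3]]]]. subst y0.
    rewrite src_id in H1, K2.
    exists y. split. exact H2. split.
    + rewrite H3. rewrite <- H1. symmetry. apply comp_id_l.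
    + rewrite <- K2 in K3. rewrite comp_id_l in K3. rewrite K3.
      rewrite src_comp in K1 by congruence. symmetry. apply comp_assoc; congruence.
  - intros [d [Hd [Hx Hw]]]. subst x w.
    assert (Rad : rng (comp a d) = rng a) by (apply rng_comp; congruence).
    exists d. split.
    + exists (comp a d). split. reflexivity. split. rewrite src_id. exact Rad.
      split. exact Hd. rewrite <- Rad. symmetry. apply comp_id_l.
    + split. rewrite src_comp by congruence. congruence.
      assert (Rw : rng (comp a (comp m d)) = rng a)
        by (apply rng_comp; rewrite rng_comp; congruence).
      split. rewrite src_id. exact Rw.
      rewrite <- Rw at 1. rewrite comp_id_l. apply comp_assoc; congruence.
Qed.

Lemma zm_dom (L : SmallCat) (a m x : Mor L) : rng m = src a -> src m = src a ->
  (Adom L (zm L a m) x <-> InRightIdeal L a x).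
Proof.
  intros Hr Hs. unfold Adom. split.
  - intros [w Hw]. apply zm_phi in Hw; auto. destruct Hw as [d [Hd [Hx _]]]. exists d; auto.
  - intros [d [Hd Hx]]. exists (comp a (comp m d)). apply zm_phi; auto. exists d; auto.
Qed.

Lemma RG_inv (L : SmallCat) v (F : Mor L -> Prop) : RingGen L v F ->
  forall x u u', rng u = src x -> rng u' = src u -> comp u u' = idm (src x) ->
  (F x <-> F (comp x u)).
Proof.
  induction 1; intros x u u' H1 H2 H3.
  - destruct H as [z [_ [_ [_ Heq]]]]. rewrite (Heq x), (Heq (comp x u)). split.
    + intro h. apply Adom_ext; auto.
    + intro h. apply (Adom_ext L z _ u') in h.
      * rewrite <- comp_assoc in h by congruence. rewrite H3, comp_id_r in h. exact h.
      * rewrite src_comp by congruence. exact H2.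
  - tauto.
  - specialize (IHRingGen1 x u u' H1 H2 H3). specialize (IHRingGen2 x u u' H1 H2 H3). tauto.
  - specialize (IHRingGen1 x u u' H1 H2 H3). specialize (IHRingGen2 x u u' H1 H2 H3). tauto.
Qed.

Lemma Av_inv (L : SmallCat) v (F : Mor L -> Prop) : Av L v F ->
  forall x u u', rng u = src x -> rng u' = src u -> comp u u' = idm (src x) ->
  (F x <-> F (comp x u)).
Proof.
  intros [F' [HF HF']] x u u' H1 H2 H3. rewrite (HF' x), (HF' (comp x u)). apply (RG_inv L v F' HF x u u'); auto.
Qed.

Lemma dirB (L : SmallCat) (hL : LeftCancellative L) :
  RightCancellative L -> Cond1 L -> Cond2 L.
Proof.
  intros hR HC1 v E HAv Hne a Ea mu nu Hinv Hr Hs Hneq. apply NNPP; intro Hno.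
  assert (HB : forall b, rng b = src a -> E (comp a b) ->
     InRightIdeal L b (comp mu b) /\ InRightIdeal L b (comp nu b)).
  { intros b Hb HE. split; apply NNPP; intro hn; apply Hno; exists b; auto. }
  destruct Hinv as [I1 [I2 [I3 I4]]].
  assert (Hra : rng a = v) by (apply (Av_elt L v E); auto).
  set (S0 := fun x => E x /\ InRightIdeal L a x).
  assert (HS0 : Av L v S0) by (apply Av_inter; auto; rewrite <- Hra; apply Av_ideal).
  destruct (ultra_exists L v S0 HS0 (ex_intro _ a (conj Ea (IRI_refl L a)))) as [U [HU HUS]].
  assert (Hri : rng (idm (src a)) = src a) by apply rng_id.
  assert (Hsi : src (idm (src a)) = src a) by apply src_id.
  set (z := zm L a (idm (src a))). set (z' := zm L a mu).
  assert (HZ : forall m, rng m = src a -> src m = src a -> InZX L (zm L a m) v U).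
  { intros m H1 H2. split. apply zm_wf; auto. split. rewrite zm_src; auto. split. exact HU.
    apply (filt_up L v U S0); auto. apply HU.
    rewrite <- Hra at 1. rewrite <- (zm_src L a m). apply Av_Adom, zm_wf; auto.
    intros x [_ hx]. apply zm_dom; auto. }
  assert (PW : forall d, rng d = src a -> E (comp a d) -> exists e f,
     rng e = src (comp a d) /\ rng f = src e /\ comp e f = idm (src (comp a d)) /\
     comp a (comp mu d) = comp (comp a d) e).
  { intros d Hd HE. destruct (HB d Hd HE) as [[e [He Hmd]] [f [Hf Hnd]]].
    assert (Sad : src (comp a d) = src d) by (apply src_comp; congruence).
    assert (Smd : src (comp mu d) = src d) by (apply src_comp; congruence).
    assert (Sde : src (comp d e) = src e) by (apply src_comp; congruence).
    assert (Se : src e = src d) by congruence.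
    exists e, f. split; [congruence|split; [congruence|split]].
    - rewrite Sad. apply (hL d).
      + rewrite rng_comp by congruence. congruence.
      + rewrite rng_id. reflexivity.
      + rewrite comp_assoc by congruence. rewrite <- Hmd.
        rewrite <- comp_assoc by congruence. rewrite <- Hnd.
        rewrite comp_assoc by congruence. rewrite I3.
        replace (rng mu) with (rng d) by congruence. rewrite comp_id_l.
        symmetry. apply comp_id_r.
    - rewrite Hmd. apply comp_assoc; congruence. }
  assert (Hsim1 : Sim1 L z z' v U).
  { exists S0. split; [exact HUS|split; [|split]].
    - intros x [_ hx]. apply zm_dom; auto.
    - intros x [_ hx]. apply zm_dom; auto.
    - intros w V HV HVS. split. reflexivity. intro F. split.
      + intros [HF [E1 [HE1 Hsub]]]. split. exact HF.
        exists (fun x => E1 x /\ S0 x). split. apply (filt_inter L w V); auto. apply HV.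
        intros b [x [[Hx1 [Hx2 Hx3]] [_ Hph]]].
        apply zm_phi in Hph; auto. destruct Hph as [d [Hd [Hx Hb]]]. subst x b.
        assert (Fad : F (comp a d)).
        { apply Hsub. exists (comp a d). split. exact Hx1. split.
          apply zm_dom; auto. apply zm_phi; auto. exists d. split. exact Hd. split. reflexivity.
          replace (src a) with (rng d) by exact Hd. rewrite comp_id_l. reflexivity. }
        destruct (PW d Hd Hx2) as [e [f [He [Hf [Hef Heq]]]]]. rewrite Heq.
        apply (proj1 (Av_inv L _ F HF (comp a d) e f He Hf Hef)). exact Fad.
      + intros [HF [E1 [HE1 Hsub]]]. split. exact HF.
        exists (fun x => E1 x /\ S0 x). split. apply (filt_inter L w V); auto. apply HV.
        intros b [x [[Hx1 [Hx2 Hx3]] [_ Hph]]].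
        apply zm_phi in Hph; auto. destruct Hph as [d [Hd [Hx Hb]]]. subst x b.
        assert (Fad : F (comp a (comp mu d))).
        { apply Hsub. exists (comp a d). split. exact Hx1. split.
          apply zm_dom; auto. apply zm_phi; auto. exists d. split. exact Hd. split; reflexivity. }
        destruct (PW d Hd Hx2) as [e [f [He [Hf [Hef Heq]]]]]. rewrite Heq in Fad.
        replace (src a) with (rng d) by exact Hd. rewrite comp_id_l.
        apply (proj2 (Av_inv L _ F HF (comp a d) e f He Hf Hef)). exact Fad. }
  destruct (proj1 (HC1 z z' v U (HZ _ Hri Hsi) (HZ _ Hr Hs)) Hsim1) as [E2 [HE2 [_ [_ Hag]]]].
  destruct (filt_ne L v U _ (proj1 HU) (filt_inter L v U E2 S0 (proj1 HU) HE2 HUS))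
    as [x [Hx1 [Hx2 [d [Hd Hx]]]]].
  assert (P1 : phi L z x (comp a (comp (idm (src a)) d))).
  { apply zm_phi; auto. exists d; auto. }
  assert (P2 : phi L z' x (comp a (comp mu d))).
  { apply zm_phi; auto. exists d; auto. }
  apply (proj1 (Hag x _ Hx1)) in P1.
  pose proof (zmap_fun L hL (zlist L z') x _ _ P1 P2) as Heq.
  apply hL in Heq; try (rewrite rng_comp; congruence).
  apply Hneq. symmetry. apply (hR d); try congruence.
Qed.

Theorem mainTheorem8 (L : SmallCat) (hL : LeftCancellative L) :
  (Cond2 L -> Cond1 L) /\ (RightCancellative L -> Cond1 L -> Cond2 L).
Proof. split. apply dirA; exact hL. apply dirB; exact hL. Qed.
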